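(* A mechanism $\varphi$ is strategyproof if and only if it is separation monotonic, separation upper invariant, and separation lower invariant.
   Context: Let $M$ be a finite set of $m$ alternatives. A preference order is a weak order $R$ on $M$ (with strict part $P$ and indifference $I$), represented as $M_1 ~P~ \ldots ~P~ M_K$, where $(M_k)_{1\le k\le K}$ is a partition of $M$ such that the agent is indifferent between any two alternatives in the same $M_k$ and strictly prefers every alternative of $M_k$ to every alternative of $M_{k+1}$. Let $\mathcal{R}$ be the set of all preference orders. A mechanism is a map $\varphi:\mathcal{R}\to\Delta(M)$ (lotteries over $M$); for $A\subseteq M$ write $\varphi_A(R)=\sum_{a\in A}\varphi_a(R)$. A lottery $x$ first order-stochastically dominates $y$ at $R$ if $\sum_{j: j R a} x_j \ge \sum_{j: j R a} y_j$ for all $a\in M$. $\varphi$ is strategyproof if for all $(R,R')\in\mathcal{R}^2$, $\varphi(R)$ first order-stochastically dominates $\varphi(R')$ at $R$. A separation is a pair $(R,R')$ such that, for some $\kappa\in\{1,\ldots,K\}$, $R$ is $M_1 P \ldots P M_\kappa P \ldots P M_K$ and $R'$ is $M_1 P' \ldots P' M_{\kappa-1} P' M^1_\kappa P' M^2_\kappa P' M_{\kappa+1} P' \ldots P' M_K$, where $M^1_\kappa \dot\cup M^2_\kappa = M_\kappa$ is a disjoint partition. The axioms: $\varphi$ is separation responsive if for all separations $\varphi_{M^1_\kappa}(R')\ge\varphi_{M^1_\kappa}(R)$ and $\varphi_{M^2_\kappa}(R')\le\varphi_{M^2_\kappa}(R)$; separation direct if for all separations with $\varphi_{M_k}(R)\ne\varphi_{M_k}(R')$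 for some $k$, we have $\varphi_{M^1_\kappa}(R')\ne\varphi_{M^1_\kappa}(R)$ and $\varphi_{M^2_\kappa}(R')\ne\varphi_{M^2_\kappa}(R)$; separation monotonic if both separation responsive and separation direct; separation upper invariant if for all separations $\varphi_{M_k}(R)=\varphi_{M_k}(R')$ for all $k\in\{1,\ldots,\kappa-1\}$; separation lower invariant if for all separations $\varphi_{M_k}(R)=\varphi_{M_k}(R')$ for all $k\in\{\kappa+1,\ldots,K\}$. *)

(* Defs.v *)
From HB Require Import structures.
From mathcomp Require Import all_boot all_order all_algebra.
Set Implicit Arguments. Unset Strict Implicit. Unset Printing Implicit Defensive.
Import Order.TTheory GRing.Theory Num.Theory.
Local Open Scope ring_scope.

Section Defs.
Variables (R : realFieldType) (M : finType).

(* A preference order (weak order) on M, represented as in the paper by its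
   ordered partition M_1 P M_2 P ... P M_K into indifference classes:
   the list [:: M_1; ...; M_K] of nonempty, pairwise disjoint sets covering M.
   (Indices in the list are 0-based.) *)
Definition is_pref (s : seq {set M}) : Prop :=
  [/\ all (fun B => B != set0) s,
      pairwise (fun A B : {set M} => [disjoint A & B]) s &
      \bigcup_(B <- s) B = [set: M]].

Definition rank (s : seq {set M}) (a : M) : nat := find (fun B : {set M} => a \in B) s.

Definition wpref (s : seq {set M}) (a b : M) : bool := (rank s a <= rank s b)%N.

Definition is_lottery (x : {ffun M -> R}) : Prop :=
  (forall a, 0 <= x a) /\ \sum_a x a = 1.

Definition massA (x : {ffun M -> R}) (A : {set M}) : R := \sum_(a in A) x a.

Definition fosd (s : seq {set M}) (x y : {ffun M -> R}) : Prop :=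
  forall a : M, \sum_(j | wpref s j a) y j <= \sum_(j | wpref s j a) x j.

Definition mechanism := seq {set M} -> {ffun M -> R}.

Definition strategyproof (phi : mechanism) : Prop :=
  forall s s', is_pref s -> is_pref s' -> fosd s (phi s) (phi s').

Definition separation (s s' : seq {set M}) (kappa : nat) (M1 M2 : {set M}) : Prop :=
  [/\ is_pref s, (kappa < size s)%N,
      [/\ M1 != set0, M2 != set0 & [disjoint M1 & M2]],
      M1 :|: M2 = nth set0 s kappa &
      s' = take kappa s ++ M1 :: M2 :: drop kappa.+1 s].

Definition separation_responsive (phi : mechanism) : Prop :=
  forall s s' kappa M1 M2, separation s s' kappa M1 M2 ->
    massA (phi s) M1 <= massA (phi s') M1 /\ massA (phi s') M2 <= massA (phi s) M2.

Definition separation_direct (phi : mechanism) : Prop :=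
  forall s s' kappa M1 M2, separation s s' kappa M1 M2 ->
    (exists2 k, (k < size s)%N &
        massA (phi s) (nth set0 s k) != massA (phi s') (nth set0 s k)) ->
    massA (phi s') M1 != massA (phi s) M1 /\ massA (phi s') M2 != massA (phi s) M2.

Definition separation_monotonic (phi : mechanism) : Prop :=
  separation_responsive phi /\ separation_direct phi.

Definition separation_upper_invariant (phi : mechanism) : Prop :=
  forall s s' kappa M1 M2, separation s s' kappa M1 M2 ->
    forall k, (k < kappa)%N ->
      massA (phi s) (nth set0 s k) = massA (phi s') (nth set0 s k).

Definition separation_lower_invariant (phi : mechanism) : Prop :=
  forall s s' kappa M1 M2, separation s s' kappa M1 M2 ->
    forall k, (kappa < k < size s)%N ->
      massA (phi s) (nth set0 s k) = massA (phi s') (nth set0 s k).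

End Defs.

(* Main.v *)
Require Import Defs.
From mathcomp Require Import all_boot all_order all_algebra.
From mathcomp Require Import lra zify.
Set Implicit Arguments. Unset Strict Implicit. Unset Printing Implicit Defensive.
Import Order.TTheory GRing.Theory Num.Theory.
Local Open Scope ring_scope.

Lemma pw_mem (T : eqType) (r : rel T) s x y :
  pairwise r s -> x \in s -> y \in s -> x != y -> r x y || r y x.
Proof.
elim: s => //= z s IH /andP[/allP allz pws]; rewrite !inE.
case/orP=> [/eqP->|xs]; case/orP=> [/eqP->|ys]; rewrite ?eqxx //.
- by move=> _; rewrite allz.
- by move=> _; rewrite allz ?orbT.
- by move=> nxy; apply: IH.
Qed.

Lemma pref_disj (M : finType) (s : seq {set M}) D E :
  is_pref s -> D \in s -> E \in s -> D = E \/ [disjoint D & E].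
Proof.
case=> _ pw _ Ds Es; case: (eqVneq D E) => [->|nDE]; [by left|right].
by case/orP: (pw_mem pw Ds Es nDE) => //; rewrite disjoint_sym.
Qed.

Lemma pref_mem (M : finType) (s : seq {set M}) a :
  is_pref s -> exists2 D, D \in s & a \in D.
Proof.
case=> _ _ cov; have : a \in \bigcup_(B <- s) B by rewrite cov inE.
by rewrite bigcup_seq => /bigcupP[D Ds aD]; exists D.
Qed.

Lemma massA_U (R : realFieldType) (M : finType) (x : {ffun M -> R}) (A B : {set M}) :
  [disjoint A & B] -> massA x (A :|: B) = massA x A + massA x B.
Proof.
move=> dAB; rewrite /massA -bigU //=; apply: eq_bigl => i; by rewrite !inE.
Qed.

Lemma massA0 (R : realFieldType) (M : finType) (x : {ffun M -> R}) :
  massA x set0 = 0.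
Proof. by rewrite /massA big_set0. Qed.

Lemma dec_gen (R : realFieldType) (M : finType) (x : {ffun M -> R}) (s : seq {set M}) X :
  pairwise (fun A B : {set M} => [disjoint A & B]) s ->
  massA x (X :&: \bigcup_(D <- s) D) = \sum_(D <- s) massA x (X :&: D).
Proof.
elim: s => [|D s IH] /=; first by rewrite !big_nil setI0 massA0.
case/andP => /allP alld pws; rewrite !big_cons setIUr massA_U ?IH //.
apply: (disjointWl (subsetIr X D)).
apply: (disjointWr (subsetIr X (\bigcup_(E <- s) E))).
by rewrite bigcup_seq; apply: bigcup_disjoint => E Es; apply: alld.
Qed.

Lemma dec (R : realFieldType) (M : finType) (x : {ffun M -> R}) (s : seq {set M}) X :
  is_pref s -> massA x X = \sum_(D <- s) massA x (X :&: D).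
Proof. by case=> _ pw cov; rewrite -dec_gen // cov setIT. Qed.
Lemma dUr (M : finType) (D A B : {set M}) :
  [disjoint D & A :|: B] = [disjoint D & A] && [disjoint D & B].
Proof. by rewrite -!setI_eq0 setIUr setU_eq0. Qed.
Lemma dUl (M : finType) (D A B : {set M}) :
  [disjoint A :|: B & D] = [disjoint A & D] && [disjoint B & D].
Proof. by rewrite -!setI_eq0 setIUl setU_eq0. Qed.

Lemma split_pref (M : finType) (pre post : seq {set M}) M1 M2 :
  M1 != set0 -> M2 != set0 -> [disjoint M1 & M2] ->
  is_pref (pre ++ (M1 :|: M2) :: post) <-> is_pref (pre ++ M1 :: M2 :: post).
Proof.
move=> n1 n2 d12.
have Ea : all (fun B => B != set0) (pre ++ (M1 :|: M2) :: post) =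
          all (fun B => B != set0) (pre ++ M1 :: M2 :: post).
  by rewrite !all_cat /= setU_eq0 (negPf n1) (negPf n2).
have Eb : pairwise (fun A B : {set M} => [disjoint A & B]) (pre ++ (M1 :|: M2) :: post) =
          pairwise (fun A B : {set M} => [disjoint A & B]) (pre ++ M1 :: M2 :: post).
  rewrite !pairwise_cat !pairwise_cons !allrel_consr /= d12 /=.
  have -> : all (fun A : {set M} => [disjoint A & M1 :|: M2]) pre =
            all (fun A : {set M} => [disjoint A & M1]) pre && all (fun A : {set M} => [disjoint A & M2]) pre.
    by rewrite -all_predI; apply: eq_all => A; rewrite /= dUr.
  have -> : all (fun B : {set M} => [disjoint M1 :|: M2 & B]) post =
            all (fun B : {set M} => [disjoint M1 & B]) post && all (fun B : {set M} => [disjoint M2 & B]) post.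
    by rewrite -all_predI; apply: eq_all => A; rewrite /= dUl.
  by rewrite -!andbA; bool_congr.
have Ec : \bigcup_(B <- pre ++ (M1 :|: M2) :: post) B =
          \bigcup_(B <- pre ++ M1 :: M2 :: post) B.
  by rewrite !big_cat /= !big_cons -setUA.
split=> -[a b c]; split.
- exact: (etrans (esym Ea) a).
- exact: (etrans (esym Eb) b).
- exact: (etrans (esym Ec) c).
- exact: (etrans Ea a).
- exact: (etrans Eb b).
- exact: (etrans Ec c).
Qed.

Definition AX (R : realFieldType) (M : finType) (phi : mechanism R M) :=
  [/\ separation_responsive phi, separation_upper_invariant phi,
      separation_lower_invariant phi & forall s, is_pref s -> is_lottery (phi s)].

Lemma sep_intro (M : finType) (pre post : seq {set M}) M1 M2 :
  is_pref (pre ++ (M1 :|: M2) :: post) ->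
  M1 != set0 -> M2 != set0 -> [disjoint M1 & M2] ->
  separation (pre ++ (M1 :|: M2) :: post) (pre ++ M1 :: M2 :: post) (size pre) M1 M2.
Proof.
move=> P n1 n2 d; split => //.
- by rewrite size_cat /= -addSnnS leq_addr.
- by rewrite nth_cat ltnn subnn.
- rewrite take_size_cat //; congr (_ ++ _ :: _ :: _).
  by elim: pre {P} => [|D pre IH] //=; rewrite drop0.
Qed.

Lemma massAT (R : realFieldType) (M : finType) (x : {ffun M -> R}) :
  is_lottery x -> massA x setT = 1.
Proof.
case=> _ <-; rewrite /massA; apply: eq_bigl => a; by rewrite inE.
Qed.

Lemma total (R : realFieldType) (M : finType) (x : {ffun M -> R}) s :
  is_lottery x -> is_pref s -> \sum_(D <- s) massA x D = 1.
Proof.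
move=> L P; rewrite -(massAT L) (dec x setT P); apply: eq_bigr => D _.
by rewrite setTI.
Qed.

Lemma step_class (R : realFieldType) (M : finType) (phi : mechanism R M) :
  AX phi -> forall (pre post : seq {set M}) M1 M2,
  is_pref (pre ++ (M1 :|: M2) :: post) ->
  M1 != set0 -> M2 != set0 -> [disjoint M1 & M2] ->
  forall D, D \in pre ++ (M1 :|: M2) :: post ->
  massA (phi (pre ++ M1 :: M2 :: post)) D = massA (phi (pre ++ (M1 :|: M2) :: post)) D.
Proof.
move=> [resp up low lot] pre post M1 M2 P n1 n2 d.
have sep := sep_intro P n1 n2 d.
set c := pre ++ (M1 :|: M2) :: post; set f := pre ++ M1 :: M2 :: post.
have Pf : is_pref f by apply/split_pref.
have Epre : forall D, D \in pre -> massA (phi f) D = massA (phi c) D.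
  move=> D Dp; have ki : (index D pre < size pre)%N by rewrite index_mem.
  have := up _ _ _ _ _ sep _ ki.
  by rewrite /c nth_cat ki nth_index // => ->.
have Epost : forall D, D \in post -> massA (phi f) D = massA (phi c) D.
  move=> D Dp; have ki : (index D post < size post)%N by rewrite index_mem.
  have kk : (size pre < size pre + (index D post).+1 < size c)%N.
    by rewrite /c size_cat /= ltn_add2l ltnS ki -addSnnS leq_addr.
  have := low _ _ _ _ _ sep _ kk.
  rewrite /c nth_cat ltnNge leq_addr /= addKn /= nth_index //.
move=> D; rewrite mem_cat inE.
case Dp: (D \in pre); first by move=> _; apply: Epre.
case Dq: (D \in post); first by move=> _; apply: Epost.
rewrite orbF /= => /eqP ->.
have Tc := total (lot _ P) P.
have Tf := total (lot _ Pf) P.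
move: Tf; rewrite -Tc /c !big_cat !big_cons.
rewrite (eq_big_seq _ Epre) (eq_big_seq _ Epost).
by move/addrI/addIr.
Qed.

Inductive refines (M : finType) : seq {set M} -> seq {set M} -> Prop :=
| ref_refl P : refines P P
| ref_step Q (pre post : seq {set M}) M1 M2 : M1 != set0 -> M2 != set0 -> [disjoint M1 & M2] ->
    refines Q (pre ++ M1 :: M2 :: post) -> refines Q (pre ++ (M1 :|: M2) :: post).

Lemma refines_trans (M : finType) (Q P S : seq {set M}) :
  refines Q P -> refines P S -> refines Q S.
Proof.
move=> QP PS; move: Q QP; elim: PS => [P' //|Q' pre post M1 M2 n1 n2 d _ IH] Q QP.
by apply: ref_step => //; apply: IH.
Qed.

Lemma refines_ctx (M : finType) (a b Q P : seq {set M}) :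
  refines Q P -> refines (a ++ Q ++ b) (a ++ P ++ b).
Proof.
elim=> [P'|{}Q pre post M1 M2 n1 n2 d _ IH]; first exact: ref_refl.
have -> : a ++ (pre ++ (M1 :|: M2) :: post) ++ b = (a ++ pre) ++ (M1 :|: M2) :: (post ++ b).
  by rewrite -!catA.
apply: ref_step => //.
by move: IH; rewrite -!catA.
Qed.

Lemma refines_pref (M : finType) (Q P : seq {set M}) :
  refines Q P -> is_pref P -> is_pref Q.
Proof.
elim=> // {}Q pre post M1 M2 n1 n2 d _ IH Pc.
by apply: IH; apply/split_pref.
Qed.

Definition ucl (M : finType) (P : seq {set M}) (X : {set M}) :=
  forall D, D \in P -> D \subset X \/ [disjoint D & X].

Lemma step_ucl (R : realFieldType) (M : finType) (phi : mechanism R M) :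
  AX phi -> forall (pre post : seq {set M}) M1 M2 X,
  is_pref (pre ++ (M1 :|: M2) :: post) ->
  M1 != set0 -> M2 != set0 -> [disjoint M1 & M2] ->
  ucl (pre ++ (M1 :|: M2) :: post) X ->
  massA (phi (pre ++ M1 :: M2 :: post)) X = massA (phi (pre ++ (M1 :|: M2) :: post)) X.
Proof.
move=> ax pre post M1 M2 X P n1 n2 d u.
rewrite (dec (phi (pre ++ M1 :: M2 :: post)) X P) (dec _ X P).
apply: eq_big_seq => D Dc.
case: (u D Dc) => [sub|dis].
  by rewrite (setIidPr sub); apply: step_class.
by rewrite (@disjoint_setI0 _ X D) ?massA0 // disjoint_sym.
Qed.

Lemma REF (R : realFieldType) (M : finType) (phi : mechanism R M) :
  AX phi -> forall (Q P : seq {set M}) X,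
  refines Q P -> is_pref P -> ucl P X -> massA (phi Q) X = massA (phi P) X.
Proof.
move=> ax Q P X; elim=> // {}Q pre post M1 M2 n1 n2 d _ IH Pc u.
have Pf : is_pref (pre ++ M1 :: M2 :: post) by apply/split_pref.
rewrite IH //; first exact: step_ucl.
move=> D; rewrite mem_cat !inE => /orP[Dp|/orP[/eqP->|/orP[/eqP->|Dq]]].
- by apply: u; rewrite mem_cat Dp.
- have := u (M1 :|: M2); rewrite mem_cat inE eqxx orbT => /(_ isT).
  case=> [s|s]; [left|right].
    exact: subset_trans (subsetUl _ _) s.
  exact: disjointWl (subsetUl _ _) s.
- have := u (M1 :|: M2); rewrite mem_cat inE eqxx orbT => /(_ isT).
  case=> [s|s]; [left|right].
    exact: subset_trans (subsetUr _ _) s.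
  exact: disjointWl (subsetUr _ _) s.
- by apply: u; rewrite mem_cat inE Dq !orbT.
Qed.

Lemma dis_setD (M : finType) (C U : {set M}) : [disjoint C :\: U & U].
Proof.
rewrite -setI_eq0; apply/eqP/setP=> x; rewrite !inE.
by case: (x \in U); rewrite ?andbF ?andbT.
Qed.

Definition splitU (M : finType) (U C : {set M}) : seq {set M} :=
  if (C :&: U != set0) && (C :\: U != set0) then [:: C :&: U; C :\: U] else [:: C].
Definition refU (M : finType) (U : {set M}) (P : seq {set M}) :=
  flatten (map (splitU U) P).

Lemma refU_cat (M : finType) (U : {set M}) a b : refU U (a ++ b) = refU U a ++ refU U b.
Proof. by rewrite /refU map_cat flatten_cat. Qed.

Lemma refines_splitU (M : finType) (U C : {set M}) : refines (splitU U C) [:: C].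
Proof.
rewrite /splitU; case: ifP => [/andP[n1 n2]|_]; last exact: ref_refl.
have -> : [:: C] = [::] ++ (C :&: U :|: C :\: U) :: [::] by rewrite setID.
apply: ref_step => //; last exact: ref_refl.
by rewrite disjoint_sym (disjointWr (subsetIr C U)) // dis_setD.
Qed.

Lemma refines_refU (M : finType) (U : {set M}) P : refines (refU U P) P.
Proof.
elim: P => [|C P IH]; first exact: ref_refl.
have -> : refU U (C :: P) = splitU U C ++ refU U P by [].
apply: (@refines_trans _ _ ([:: C] ++ refU U P)).
  exact: (@refines_ctx _ [::] (refU U P) _ _ (refines_splitU U C)).
have := @refines_ctx _ [:: C] [::] _ _ IH; rewrite !cats0; exact.
Qed.

Lemma ucl_refU (M : finType) (U : {set M}) P : ucl (refU U P) U.
Proof.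
move=> D /flatten_mapP[C _]; rewrite /splitU.
case: ifP => [_|/negbT]; rewrite ?inE.
  case/orP=> /eqP->; [left; exact: subsetIr| right; exact: dis_setD].
rewrite negb_and !negbK => /orP[e|e] /eqP->.
  by right; rewrite -setI_eq0.
by left; rewrite -setD_eq0.
Qed.

Lemma ucl_class (M : finType) (s : seq {set M}) E : is_pref s -> E \in s -> ucl s E.
Proof.
move=> P Es D Ds; case: (pref_disj P Ds Es) => [->|]; by [left | right].
Qed.

Lemma R1 (R : realFieldType) (M : finType) (phi : mechanism R M) :
  AX phi -> forall (U : {set M}) P, is_pref P ->
  massA (phi P) U <= massA (phi (refU U P)) U.
Proof.
move=> ax U P PP; have ax' := ax; case: ax' => resp _ _ _.
have PQ := refines_refU U P.
rewrite (dec (phi P) U PP) (dec (phi (refU U P)) U PP) !big_seq.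
apply: ler_sum => C Cs; rewrite setIC.
case b: ((C :&: U != set0) && (C :\: U != set0)); last first.
  move/negbT: b; rewrite negb_and !negbK => /orP[/eqP->|].
    by rewrite !massA0.
  rewrite setD_eq0 => /setIidPr; rewrite setIC => ->.
  by rewrite (REF ax PQ PP (ucl_class PP Cs)).
case/andP: b => n1 n2.
case/splitPr: Cs PP PQ => pre post PP PQ.
have eC : C = C :&: U :|: C :\: U by rewrite setID.
have d : [disjoint C :&: U & C :\: U].
  by rewrite disjoint_sym (disjointWr (subsetIr C U)) // dis_setD.
have PP' := PP; rewrite eC in PP'.
have sep := sep_intro PP' n1 n2 d.
have PC : is_pref (pre ++ C :&: U :: C :\: U :: post) by apply/split_pref.
have r1 := (resp _ _ _ _ _ sep).1; rewrite -eC in r1.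
apply: (le_trans r1).
suff -> : massA (phi (refU U (pre ++ C :: post))) (C :&: U) =
  massA (phi (pre ++ C :&: U :: C :\: U :: post)) (C :&: U) by [].
apply: (REF ax) => //; last first.
  by apply: ucl_class => //; rewrite mem_cat inE eqxx orbT.
rewrite refU_cat.
have -> : refU U (C :: post) = [:: C :&: U; C :\: U] ++ refU U post.
  by rewrite /refU /= /splitU; case: ifP => // /negP[]; apply/andP.
apply: (@refines_trans _ _ (pre ++ [:: C :&: U; C :\: U] ++ refU U post)).
  have := @refines_ctx _ [::] ([:: C :&: U; C :\: U] ++ refU U post) _ _ (refines_refU U pre).
  by [].
have := @refines_ctx _ (pre ++ [:: C :&: U; C :\: U]) [::] _ _ (refines_refU U post).
by rewrite !cats0 -!catA.
Qed.

Lemma pref_parts (M : finType) (pre post : seq {set M}) B A :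
  is_pref (pre ++ B :: A :: post) ->
  [/\ B != set0, A != set0 & [disjoint B & A]].
Proof.
case=> ne pw _; move: ne pw; rewrite all_cat pairwise_cat /=.
by case/and4P=> _ nB nA _ /and5P[_ _ /andP[dBA _] _ _].
Qed.

Lemma swapU (R : realFieldType) (M : finType) (phi : mechanism R M) :
  AX phi -> forall (U : {set M}) (pre post : seq {set M}) A B,
  is_pref (pre ++ B :: A :: post) -> A \subset U -> [disjoint B & U] ->
  ucl (pre ++ post) U ->
  is_pref (pre ++ A :: B :: post) /\
  massA (phi (pre ++ B :: A :: post)) U <= massA (phi (pre ++ A :: B :: post)) U.
Proof.
move=> ax U pre post A B P1 sA dB u.
have ax' := ax; case: ax' => resp _ _ _.
case: (pref_parts P1) => nB nA dBA.
have dAB : [disjoint A & B] by rewrite disjoint_sym.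
have Pc : is_pref (pre ++ (B :|: A) :: post) by apply/split_pref.
have Pc' : is_pref (pre ++ (A :|: B) :: post) by rewrite setUC.
have P2 : is_pref (pre ++ A :: B :: post) by apply/split_pref.
split => //.
have r1 := (resp _ _ _ _ _ (sep_intro Pc nB nA dBA)).2.
have r2 := (resp _ _ _ _ _ (sep_intro Pc' nA nB dAB)).1.
rewrite setUC in r2.
have E : forall D, D \in pre ++ post ->
    massA (phi (pre ++ B :: A :: post)) (U :&: D) = massA (phi (pre ++ A :: B :: post)) (U :&: D).
  move=> D Dpp; case: (u D Dpp) => [sub|dis]; last first.
    by rewrite (@disjoint_setI0 _ U D) ?massA0 // disjoint_sym.
  rewrite (setIidPr sub) (step_class ax Pc nB nA dBA); last first.
    by move: Dpp; rewrite !mem_cat inE => /orP[->|->]; rewrite ?orbT.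
  rewrite (step_class ax Pc' nA nB dAB); last first.
    by move: Dpp; rewrite !mem_cat inE => /orP[->|->]; rewrite ?orbT.
  by rewrite setUC.
rewrite (dec (phi (pre ++ B :: A :: post)) U P1) (dec (phi (pre ++ A :: B :: post)) U P1).
rewrite !big_cat !big_cons.
have Hpre : {in pre, (fun D => massA (phi (pre ++ B :: A :: post)) (U :&: D)) =1
                   (fun D => massA (phi (pre ++ A :: B :: post)) (U :&: D))}.
  by move=> D Dp; apply: E; rewrite mem_cat Dp.
have Hpost : {in post, (fun D => massA (phi (pre ++ B :: A :: post)) (U :&: D)) =1
                   (fun D => massA (phi (pre ++ A :: B :: post)) (U :&: D))}.
  by move=> D Dp; apply: E; rewrite mem_cat Dp orbT.
rewrite (eq_big_seq _ Hpre) (eq_big_seq _ Hpost).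
apply: lerD => //.
rewrite (@disjoint_setI0 _ U B) ?massA0; last by rewrite disjoint_sym.
apply: lerD => //; apply: lerD => //.
rewrite (setIidPr sA); exact: le_trans r1 r2.
Qed.

Lemma bubble (R : realFieldType) (M : finType) (phi : mechanism R M) :
  AX phi -> forall (U : {set M}) (Us : seq {set M}) C rest pre,
  is_pref (pre ++ C :: Us ++ rest) -> all (fun D : {set M} => D \subset U) Us ->
  [disjoint C & U] -> ucl (pre ++ rest) U ->
  is_pref (pre ++ Us ++ C :: rest) /\
  massA (phi (pre ++ C :: Us ++ rest)) U <= massA (phi (pre ++ Us ++ C :: rest)) U.
Proof.
move=> ax U; elim=> [|A Us IH] C rest pre P aU dC u; first by split.
case/andP: aU => sA aU.
rewrite cat_cons in P; rewrite !cat_cons.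
have u1 : ucl (pre ++ Us ++ rest) U.
  move=> D; rewrite !mem_cat => /orP[Dp|/orP[Du|Dr]].
  - by apply: u; rewrite mem_cat Dp.
  - by left; move/allP: aU; apply.
  - by apply: u; rewrite mem_cat Dr orbT.
have [P2 le1] := swapU ax P sA dC u1.
have P2' : is_pref ((pre ++ [:: A]) ++ C :: Us ++ rest) by rewrite -catA.
have u2 : ucl ((pre ++ [:: A]) ++ rest) U.
  move=> D; rewrite !mem_cat inE => /orP[/orP[Dp|/eqP->]|Dr].
  - by apply: u; rewrite mem_cat Dp.
  - by left.
  - by apply: u; rewrite mem_cat Dr orbT.
have [P3 le2] := IH C rest (pre ++ [:: A]) P2' aU dC u2.
rewrite -!catA /= in P3 le2; split => //.
exact: le_trans le1 le2.
Qed.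

Definition sortU (M : finType) (U : {set M}) (P : seq {set M}) :=
  filter (fun D : {set M} => D \subset U) P ++ filter (fun D : {set M} => ~~ (D \subset U)) P.

Lemma sortL (R : realFieldType) (M : finType) (phi : mechanism R M) :
  AX phi -> forall (U : {set M}) (P pre : seq {set M}),
  is_pref (pre ++ P) -> ucl (pre ++ P) U ->
  is_pref (pre ++ sortU U P) /\
  massA (phi (pre ++ P)) U <= massA (phi (pre ++ sortU U P)) U.
Proof.
move=> ax U; elim=> [|C P IH] pre PP u; first by split.
have PP' : is_pref ((pre ++ [:: C]) ++ P) by rewrite -catA.
have u' : ucl ((pre ++ [:: C]) ++ P) U by rewrite -catA.
have [P1 le1] := IH _ PP' u'.
rewrite -!catA /= in P1 le1.
case sC: (C \subset U).
  by rewrite /sortU /= sC /=; split; [exact: P1|exact: le1].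
have dC : [disjoint C & U].
  have : C \in pre ++ C :: P by rewrite mem_cat inE eqxx orbT.
  by case/u => //; rewrite sC.
have -> : sortU U (C :: P) =
   filter (fun D : {set M} => D \subset U) P ++ C :: filter (fun D : {set M} => ~~ (D \subset U)) P.
  by rewrite /sortU /= sC.
have u2 : ucl (pre ++ filter (fun D : {set M} => ~~ (D \subset U)) P) U.
  move=> D; rewrite mem_cat => /orP[Dp|]; first by apply: u; rewrite mem_cat Dp.
  by rewrite mem_filter => /andP[_ DP]; apply: u; rewrite mem_cat inE DP !orbT.
have [P2 le2] := bubble ax P1 (filter_all _ _) dC u2.
split => //; exact: le_trans le1 le2.
Qed.

Lemma refines_pref_inv (M : finType) (Q P : seq {set M}) :
  refines Q P -> is_pref Q -> is_pref P.
Proof.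
elim=> // {}Q pre post M1 M2 n1 n2 d _ IH PQ.
by apply/split_pref => //; apply: IH.
Qed.

Lemma refines_one (M : finType) (l : seq {set M}) C :
  all (fun B => B != set0) (C :: l) ->
  pairwise (fun A B : {set M} => [disjoint A & B]) (C :: l) ->
  refines (C :: l) [:: \bigcup_(D <- C :: l) D].
Proof.
elim: l C => [|C' l IH] C ne pw.
  by rewrite big_seq1; exact: ref_refl.
rewrite big_cons.
have ne' : all (fun B => B != set0) (C' :: l) by case/andP: ne.
have pw' : pairwise (fun A B : {set M} => [disjoint A & B]) (C' :: l) by case/andP: pw.
have nC : C != set0 by case/andP: ne.
have nU : \bigcup_(D <- C' :: l) D != set0.
  apply: (@subset_neq0 _ C'); last by case/andP: ne'.
  by rewrite big_cons subsetUl.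
have dC : [disjoint C & \bigcup_(D <- C' :: l) D].
  case/andP: pw => /allP aC _; rewrite bigcup_seq.
  by apply: bigcup_disjoint => D /aC.
have -> : [:: C :|: \bigcup_(D <- C' :: l) D] = [::] ++ C :|: \bigcup_(D <- C' :: l) D :: [::] by [].
apply: ref_step => //.
have := @refines_ctx _ [:: C] [::] _ _ (IH C' ne' pw'); by rewrite !cats0.
Qed.

Lemma compl_of (M : finType) (A B : {set M}) :
  [disjoint A & B] -> A :|: B = setT -> B = ~: A.
Proof.
move=> d cov; apply/setP => x; move/setP: cov => /(_ x).
move/setP: (disjoint_setI0 d) => /(_ x).
rewrite !inE; case: (x \in A); case: (x \in B) => //=.
Qed.

Lemma two (R : realFieldType) (M : finType) (phi : mechanism R M) :
  AX phi -> forall (U : {set M}) (l1 l2 : seq {set M}),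
  is_pref (l1 ++ l2) -> l1 != [::] -> l2 != [::] -> \bigcup_(D <- l1) D = U ->
  massA (phi (l1 ++ l2)) U = massA (phi [:: U; ~: U]) U.
Proof.
move=> ax U l1 l2 P n1 n2 eU.
have P' := P; case: P' => ne pw cov.
move: ne pw cov; rewrite all_cat pairwise_cat big_cat => /andP[ne1 ne2] /and3P[ar pw1 pw2] cov.
have d : [disjoint \bigcup_(D <- l1) D & \bigcup_(D <- l2) D].
  rewrite !bigcup_seq; apply: bigcup_disjoint => E E2; rewrite disjoint_sym.
  apply: bigcup_disjoint => D D1; rewrite disjoint_sym.
  by move/allrelP: ar; apply.
have e2 := compl_of d cov; rewrite eU in e2.
have r1 : refines (l1 ++ l2) [:: \bigcup_(D <- l1) D; \bigcup_(D <- l2) D].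
  case: l1 n1 ne1 pw1 {ar eU d e2 cov P} => // C1 l1 _ ne1 pw1.
  case: l2 n2 ne2 pw2 => // C2 l2 _ ne2 pw2.
  apply: (@refines_trans _ _ ([:: \bigcup_(D <- C1 :: l1) D] ++ C2 :: l2)).
    exact: (@refines_ctx _ [::] (C2 :: l2) _ _ (refines_one ne1 pw1)).
  have := @refines_ctx _ [:: \bigcup_(D <- C1 :: l1) D] [::] _ _ (refines_one ne2 pw2).
  by rewrite !cats0.
rewrite eU e2 in r1.
apply: (REF ax r1).
  exact: refines_pref_inv r1 P.
move=> D; rewrite !inE => /orP[/eqP->|/eqP->]; [left | right] => //.
by rewrite -setI_eq0 setIC setICr.
Qed.

Lemma wsum (R : realFieldType) (M : finType) (x : {ffun M -> R}) (s : seq {set M}) a :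
  \sum_(j | wpref s j a) x j = massA x [set j | wpref s j a].
Proof. by rewrite /massA; apply: eq_bigl => j; rewrite inE. Qed.

Lemma rank_set (M : finType) (s : seq {set M}) a : is_pref s ->
  [set j | wpref s j a] = \bigcup_(C <- take (rank s a).+1 s) C.
Proof.
move=> P; apply/setP => j; rewrite inE /wpref /rank -ltnS -has_take; last first.
  by case: (pref_mem j P) => D Ds jD; apply/hasP; exists D.
rewrite bigcup_seq; apply/hasP/bigcupP => [[D Dt jD]|[D Dt jD]]; by exists D.
Qed.

Lemma sp_of_ax (R : realFieldType) (M : finType) (phi : mechanism R M) :
  AX phi -> strategyproof phi.
Proof.
move=> ax s s' Ps Ps' a; have ax' := ax; case: ax' => _ _ _ lot.
rewrite !wsum.
have aU : a \in [set j | wpref s j a] by rewrite inE /wpref leqnn.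
move: aU; rewrite (rank_set _ Ps); set U := \bigcup_(C <- _) C => aU.
case: (eqVneq U setT) => [UT|UnT].
  by rewrite UT !massAT //; apply: lot.
have nd : drop (rank s a).+1 s != [::].
  apply: contraNneq UnT => d0; case: Ps => _ _ <-; rewrite /U.
  by have := cat_take_drop (rank s a).+1 s; rewrite d0 cats0 => ->.
have nt : take (rank s a).+1 s != [::].
  by apply: contraTneq aU => e; rewrite /U e big_nil inE.
have Pst : is_pref (take (rank s a).+1 s ++ drop (rank s a).+1 s) by rewrite cat_take_drop.
have eq1 := two ax Pst nt nd (erefl U).
rewrite cat_take_drop in eq1; rewrite eq1.
set Q := refU U s'.
have PQ : is_pref Q by apply: refines_pref (refines_refU U s') Ps'.
have le1 := R1 ax U Ps'.
have [PS le2] := @sortL _ _ _ ax U Q [::] PQ (@ucl_refU _ U s').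
rewrite /= in PS le2.
have uQ := @ucl_refU _ U s'; rewrite -/Q in uQ.
have eG : \bigcup_(D <- filter (fun D : {set M} => D \subset U) Q) D = U.
  apply/setP => x; rewrite bigcup_seq; apply/bigcupP/idP => [[D]|xU].
    by rewrite mem_filter => /andP[sD _] xD; apply: (subsetP sD).
  case: (pref_mem x PQ) => D DQ xD; exists D => //.
  rewrite mem_filter DQ andbT; case: (uQ D DQ) => // dis.
  move: dis; rewrite -setI_eq0 => /eqP e.
  by have := in_set0 x; rewrite -e !inE xD xU.
have nG : filter (fun D : {set M} => D \subset U) Q != [::].
  by apply: contraTneq aU => e; rewrite -eG e big_nil inE.
have nB : filter (fun D : {set M} => ~~ (D \subset U)) Q != [::].
  apply: contraNneq UnT => e; apply/eqP/setP => x; rewrite inE.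
  case: (pref_mem x PQ) => D DQ xD.
  case sD: (D \subset U); first exact: (subsetP sD).
  have : D \in filter (fun D : {set M} => ~~ (D \subset U)) Q by rewrite mem_filter sD.
  by rewrite e.
have eq2 := two ax PS nG nB eG.
rewrite /sortU in le2; rewrite eq2 in le2.
exact: le_trans le1 le2.
Qed.

Lemma rank_nth (M : finType) (s : seq {set M}) i a :
  is_pref s -> (i < size s)%N -> a \in nth set0 s i -> rank s a = i.
Proof.
move=> P lt ai; have P' := P; case: P' => _ pw _.
have hs : has (fun B : {set M} => a \in B) s by apply/hasP; exists (nth set0 s i); rewrite ?mem_nth.
have fl : (rank s a < size s)%N by rewrite -has_find.
have nf := nth_find set0 hs.
case: (ltngtP (rank s a) i) => // h.
- have := (pairwiseP set0 pw) (rank s a) i fl lt h.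
  rewrite -setI_eq0 => /eqP e; have := in_set0 a; rewrite -e inE ai andbT.
  by move: nf; rewrite /rank => ->.
- by have := before_find set0 h; rewrite ai.
Qed.

Definition Up (M : finType) (s : seq {set M}) i := \bigcup_(C <- take i s) C.

Lemma sp_up (R : realFieldType) (M : finType) (phi : mechanism R M) :
  strategyproof phi -> forall (s s' : seq {set M}) i, is_pref s -> is_pref s' ->
  (i <= size s)%N -> massA (phi s') (Up s i) <= massA (phi s) (Up s i).
Proof.
move=> sp s s' [|k] Ps Ps' lk; first by rewrite /Up take0 big_nil !massA0.
have Ps0 := Ps; case: Ps0 => /allP ne _ _.
have : nth set0 s k != set0 by apply: ne; rewrite mem_nth.
case/set0Pn => a ak.
have := sp s s' Ps Ps' a; rewrite /fosd.
rewrite !wsum (rank_set _ Ps) (rank_nth Ps lk ak) //.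
Qed.

Lemma up_split (M : finType) (s : seq {set M}) k :
  is_pref s -> (k < size s)%N ->
  Up s k.+1 = Up s k :|: nth set0 s k /\ [disjoint Up s k & nth set0 s k].
Proof.
move=> [_ pw _] lk; split.
  by rewrite /Up (take_nth set0 lk) -cats1 big_cat big_seq1.
have : pairwise (fun A B : {set M} => [disjoint A & B]) (take k s ++ drop k s).
  by rewrite cat_take_drop.
rewrite pairwise_cat (drop_nth set0 lk) => /and3P[ar _ _].
rewrite /Up bigcup_seq disjoint_sym.
apply: bigcup_disjoint => D Dt; rewrite disjoint_sym.
by move/allrelP: ar; apply => //; rewrite inE eqxx.
Qed.

Lemma takeL (T : Type) (pre l : seq T) i : (i <= size pre)%N -> take i (pre ++ l) = take i pre.
Proof.
rewrite take_cat; case: ltnP => // h1 h2.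
have -> : i = size pre by apply/eqP; rewrite eqn_leq h1 h2.
by rewrite subnn take0 cats0 take_size.
Qed.

Lemma takeR (T : Type) (pre l : seq T) n : take (size pre + n) (pre ++ l) = pre ++ take n l.
Proof. by rewrite take_cat ltnNge leq_addr /= addKn. Qed.

Lemma sp_core (R : realFieldType) (M : finType) (phi : mechanism R M) :
  strategyproof phi -> (forall s, is_pref s -> is_lottery (phi s)) ->
  forall (pre post : seq {set M}) M1 M2,
  is_pref (pre ++ (M1 :|: M2) :: post) ->
  M1 != set0 -> M2 != set0 -> [disjoint M1 & M2] ->
  [/\ forall k, (k < size (pre ++ (M1 :|: M2) :: post))%N ->
        massA (phi (pre ++ (M1 :|: M2) :: post)) (nth set0 (pre ++ (M1 :|: M2) :: post) k) =
        massA (phi (pre ++ M1 :: M2 :: post)) (nth set0 (pre ++ (M1 :|: M2) :: post) k),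
      massA (phi (pre ++ (M1 :|: M2) :: post)) M1 <= massA (phi (pre ++ M1 :: M2 :: post)) M1 &
      massA (phi (pre ++ M1 :: M2 :: post)) M2 <= massA (phi (pre ++ (M1 :|: M2) :: post)) M2].
Proof.
move=> sp lot pre post M1 M2 Ps n1 n2 d.
have Ps' : is_pref (pre ++ M1 :: M2 :: post) by apply/split_pref.
set s := pre ++ (M1 :|: M2) :: post in Ps *; set s' := pre ++ M1 :: M2 :: post in Ps' *.
have ss' : size s' = (size s).+1 by rewrite /s /s' !size_cat /= addnS.
have le1 : forall i, (i <= size s)%N -> massA (phi s') (Up s i) <= massA (phi s) (Up s i).
  by move=> i; apply: sp_up.
have le2 : forall i, (i <= size s')%N -> massA (phi s) (Up s' i) <= massA (phi s') (Up s' i).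
  by move=> i; apply: sp_up.
have E : forall i, (i <= size s)%N -> massA (phi s) (Up s i) = massA (phi s') (Up s i).
  move=> i li; apply/le_anti; rewrite le1 // andbT.
  case: (leqP i (size pre)) => hi.
    have -> : Up s i = Up s' i by rewrite /Up /s /s' !takeL.
    by apply: le2; rewrite ss' leqW.
  have [j ej] : exists j, i = size pre + j.+1 by exists (i - size pre).-1; lia.
  have -> : Up s i = Up s' (size pre + j.+2).
    by rewrite ej /Up /s /s' !takeR /= !big_cat /= !big_cons -setUA.
  apply: le2; rewrite ss'; move: li; rewrite ej /s size_cat /=; lia.
have C : forall k, (k < size s)%N ->
    massA (phi s) (nth set0 s k) = massA (phi s') (nth set0 s k).
  move=> k lk; have [e dk] := up_split Ps lk.
  have := E k.+1 lk; have := E k (ltnW lk).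
  rewrite e !massA_U //; lra.
have pl : (size pre < size s)%N by rewrite /s size_cat /= -addSnnS leq_addr.
have cls : nth set0 s (size pre) = M1 :|: M2 by rewrite /s nth_cat ltnn subnn.
have r1 : massA (phi s) M1 <= massA (phi s') M1.
  have := le2 (size pre).+1; rewrite ss' ltnS ltnW // => /(_ isT).
  have -> : Up s' (size pre).+1 = Up s (size pre) :|: M1.
    by rewrite /Up /s /s' -addn1 takeR takeL // take_size big_cat big_seq1.
  have dM : [disjoint Up s (size pre) & M1].
    have [_ dd] := up_split Ps pl; rewrite cls in dd.
    exact: disjointWr (subsetUl _ _) dd.
  have := E (size pre) (ltnW pl).
  rewrite !massA_U //; lra.
split => //.
have := C _ pl; rewrite cls !massA_U //; lra.
Qed.

Lemma sep_decomp (M : finType) (s s' : seq {set M}) kappa M1 M2 :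
  separation s s' kappa M1 M2 ->
  exists pre, exists post,
  [/\ s = pre ++ (M1 :|: M2) :: post, s' = pre ++ M1 :: M2 :: post, kappa = size pre,
      is_pref s & [/\ M1 != set0, M2 != set0 & [disjoint M1 & M2]]].
Proof.
case=> Ps kl nd eX es'; exists (take kappa s), (drop kappa.+1 s).
have es : s = take kappa s ++ (M1 :|: M2) :: drop kappa.+1 s.
  by rewrite eX -drop_nth // cat_take_drop.
split => //; first by rewrite size_take kl.
Qed.

Unset Implicit Arguments.

Theorem theorem1 (R : realFieldType) (M : finType) (phi : mechanism R M)
  (hlot : forall s, is_pref s -> is_lottery (phi s)) :
  strategyproof phi <->
  [/\ separation_monotonic phi, separation_upper_invariant phi
    & separation_lower_invariant phi].
Proof.
split.
  move=> sp; split; first split.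
  - move=> s s' k M1 M2 /sep_decomp[pre [post [-> -> _ Ps [n1 n2 d]]]].
    by have [_ r1 r2] := sp_core sp hlot Ps n1 n2 d.
  - move=> s s' k M1 M2 /sep_decomp[pre [post [-> -> _ Ps [n1 n2 d]]]].
    have [C _ _] := sp_core sp hlot Ps n1 n2 d.
    by case=> k' lk; rewrite C // eqxx.
  - move=> s s' k M1 M2 /sep_decomp[pre [post [-> -> ek Ps [n1 n2 d]]]] k' lk; rewrite ek in lk.
    have [C _ _] := sp_core sp hlot Ps n1 n2 d.
    by apply: C; rewrite size_cat (leq_trans lk) // leq_addr.
  - move=> s s' k M1 M2 /sep_decomp[pre [post [-> -> _ Ps [n1 n2 d]]]] k' /andP[_ lk].
    have [C _ _] := sp_core sp hlot Ps n1 n2 d.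
    exact: C.
case=> [[resp _] up low].
by apply: sp_of_ax; split.
Qed.
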